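(* Fix $k\in[n]$ and arbitrary negotiating positions $\mu_i'\in\mathbb{R}^n$ for $i\neq k$. Then $\sup_{\mu_k'\in\mathbb{R}^n} g_k(W',P')<\infty$, where $(W',P')$ is the stable point for the matrix $M'$ with columns $\mu_1',\dots,\mu_n'$. That is, no choice of negotiating position gives agent $k$ unbounded utility, even with full knowledge of the other agents' beliefs and positions.
   Context: Fix agents $[n]=\{1,\dots,n\}$. Let $\Sigma\in\mathbb{R}^{n\times n}$ be symmetric positive definite, $\Gamma=\mathrm{diag}(\gamma_1,\dots,\gamma_n)$ with all $\gamma_i>0$, and let $M\in\mathbb{R}^{n\times n}$ be the matrix of true beliefs with $i$-th column $\mu_i=Me_i$. For a matrix of reported negotiating positions $M'\in\mathbb{R}^{n\times n}$, the stable point for $M'$ is the unique pair $(W,P)$ of real $n\times n$ matrices with $W=W^T$, $P^T=-P$ and $M'-P=2\Sigma W\Gamma$; equivalently $\mathrm{vec}(W)=\tfrac12(\Gamma\otimes\Sigma+\Sigma\otimes\Gamma)^{-1}\mathrm{vec}(M'+M'^T)$ and $P=M'-2\Sigma W\Gamma$. Here $\mathrm{vec}$ stacks columns and $e_i$ is the $i$-th standard basis vector. Agent $i$'s (true) utility at $(W,P)$ is $g_i(W,P)=w_i^T(\mu_i-Pe_i)-\gamma_i\, w_i^T\Sigma w_i$, where $w_i=We_i$. *)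

(* Defs.v *)
From mathcomp Require Import all_boot all_order all_algebra.
From mathcomp Require Import reals.
Set Implicit Arguments. Unset Strict Implicit. Unset Printing Implicit Defensive.
Import Order.TTheory GRing.Theory Num.Theory.
Local Open Scope ring_scope.

Definition sym_posdef (R : realType) (n : nat) (S : 'M[R]_n) : Prop :=
  S^T = S /\ forall x : 'cV[R]_n, x != 0 -> 0 < (x^T *m S *m x) 0 0.

Definition Gam (R : realType) (n : nat) (gamma : 'I_n -> R) : 'M[R]_n :=
  diag_mx (\row_i gamma i).

(* (W,P) is the stable point for M': W symmetric, P antisymmetric,
   M' - P = 2 Sigma W Gamma.  (Such a pair exists and is unique.) *)
Definition is_stable_point (R : realType) (n : nat) (Sigma : 'M[R]_n)
  (gamma : 'I_n -> R) (M' W P : 'M[R]_n) : Prop :=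
  W^T = W /\ P^T = - P /\ M' - P = 2%:R *: (Sigma *m W *m Gam gamma).

Definition utility (R : realType) (n : nat) (Sigma : 'M[R]_n)
  (gamma : 'I_n -> R) (M : 'M[R]_n) (i : 'I_n) (W P : 'M[R]_n) : R :=
  ((col i W)^T *m (col i M - col i P)) 0 0
  - gamma i * ((col i W)^T *m Sigma *m col i W) 0 0.

Definition replace_col (R : realType) (n : nat) (M0 : 'M[R]_n) (k : 'I_n)
  (v : 'cV[R]_n) : 'M[R]_n :=
  \matrix_(a, b) if b == k then v a 0 else M0 a b.

(* Main.v *)
Require Import Defs.
From mathcomp Require Import all_boot all_order all_algebra.
From mathcomp Require Import reals.
From mathcomp Require Import lra.
Import Order.TTheory GRing.Theory Num.Theory.
Local Open Scope ring_scope.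
Set Implicit Arguments. Unset Strict Implicit.

Section Aux.
Variables (R : realType) (n : nat).
Implicit Types (x y z a : 'cV[R]_n) (S : 'M[R]_n).

Definition dot x y : R := (x^T *m y) 0 0.

Lemma dotDr x y z : dot x (y + z) = dot x y + dot x z.
Proof. by rewrite /dot mulmxDr mxE. Qed.
Lemma dotBr x y z : dot x (y - z) = dot x y - dot x z.
Proof. by rewrite /dot mulmxBr mxE mxE mxE. Qed.
Lemma dotZr x (c : R) y : dot x (c *: y) = c * dot x y.
Proof. by rewrite /dot -scalemxAr mxE. Qed.
Lemma dotC x y : dot x y = dot y x.
Proof.
rewrite /dot; transitivity ((x^T *m y)^T 0 0); first by rewrite [RHS]mxE.
by rewrite trmx_mul trmxK.
Qed.
Lemma dotS S x y : S^T = S -> dot x (S *m y) = dot y (S *m x).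
Proof.
move=> hS; rewrite dotC /dot trmx_mul hS mulmxA //.
Qed.

Lemma unit_of_pd S : sym_posdef S -> S \in unitmx.
Proof.
move=> [hS hP]; rewrite unitmxE unitfE; apply/negP => /det0P [v v0 hv].
have := hP v^T; rewrite trmx_eq0 => /(_ v0); rewrite trmxK hv mul0mx mxE.
by rewrite ltxx.
Qed.

Lemma q_ge0 S x : sym_posdef S -> 0 <= dot x (S *m x).
Proof.
move=> [hS hP]; have [->|x0] := eqVneq x 0.
  by rewrite /dot !mulmx0 mxE.
by apply/ltW; rewrite /dot mulmxA; exact: hP.
Qed.

Definition bnd S a (c : R) : R :=
  let u := (2 * c)^-1 *: (invmx S *m a) in c * dot u (S *m u).

Lemma bndP S a (c : R) x : sym_posdef S -> 0 < c ->
  dot x a - c * dot x (S *m x) <= bnd S a c.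
Proof.
move=> hpd hc; have hU := unit_of_pd hpd; have hS := hpd.1.
rewrite /bnd; set u := _ *: _.
have hSu : S *m u = (2 * c)^-1 *: a by rewrite -scalemxAr mulKVmx.
have := q_ge0 (x - u) hpd.
rewrite mulmxBr !dotBr (dotS (x-u) x hS) (dotS (x-u) u hS) !mulmxBr !dotBr (dotS u x hS) hSu dotZr.
idtac.
have h2c : (2 * c) != 0 by rewrite mulf_neq0 // ?gt_eqF //; lra.
move=> h.
set t := (2 * c)^-1 * dot x a.
have e : dot x a = (2 * c) * t by rewrite /t mulrA mulfV ?mul1r.
rewrite e; rewrite -/t in h.
have hc' := mulr_ge0 (ltW hc) h.
nra.
Qed.

End Aux.


Lemma colGam (R : realType) (n : nat) (gamma : 'I_n -> R) i :
  col i (Gam gamma) = gamma i *: delta_mx i 0.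
Proof.
apply/matrixP=> a b; rewrite !mxE (ord1 b) eqxx andbT.
by case: (eqVneq a i) => [->|ne]; rewrite /= ?mulr1 ?mulr0 // eq_sym (negbTE ne).
Qed.

Lemma colM (R : realType) (n : nat) (A B : 'M[R]_n) i : col i (A *m B) = A *m col i B.
Proof. by rewrite !colE mulmxA. Qed.

Lemma colZ (R : realType) (n : nat) (A : 'M[R]_n) (a : R) i : col i (a *: A) = a *: col i A.
Proof. by apply/matrixP => x y; rewrite !mxE. Qed.

Lemma uE (R : realType) (n : nat) (Sigma : 'M[R]_n) (gamma : 'I_n -> R) (M : 'M[R]_n) i W P :
  utility Sigma gamma M i W P = dot (col i W) (col i M) - dot (col i W) (col i P)
     - gamma i * dot (col i W) (Sigma *m col i W).
Proof. by rewrite /utility -dotBr /dot mulmxA. Qed.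

Lemma trace0 (R : realType) (n : nat) (W P : 'M[R]_n) : W^T = W -> P^T = - P ->
  \sum_i dot (col i W) (col i P) = 0.
Proof.
move=> hW hP.
have hW' i j : W i j = W j i by rewrite -{1}hW mxE.
have hP' i j : P i j = - P j i by have := congr1 (fun A : 'M[R]_n => A j i) hP; rewrite !mxE.
have e : \sum_i dot (col i W) (col i P) = \sum_i \sum_j W j i * P j i.
  by apply: eq_bigr => i _; rewrite /dot mxE; apply: eq_bigr => j _; rewrite !mxE.
rewrite e; set s := (X in X = 0).
have : s = - s.
  rewrite {1}/s exchange_big /s -sumrN; apply: eq_bigr => i _.
  rewrite -sumrN; apply: eq_bigr => j _.
  by rewrite hW' hP' mulrN.
lra.
Qed.

Theorem mainTheorem5 (R : realType) (n : nat) (Sigma : 'M[R]_n)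
  (gamma : 'I_n -> R) (M : 'M[R]_n) (k : 'I_n) (M0 : 'M[R]_n) :
  sym_posdef Sigma ->
  (forall i, 0 < gamma i) ->
  exists B : R, forall (mu'k : 'cV[R]_n) (W' P' : 'M[R]_n),
    is_stable_point Sigma gamma (replace_col M0 k mu'k) W' P' ->
    utility Sigma gamma M k W' P' <= B.
Proof.
move=> hpd hg.
exists (\sum_i bnd Sigma (col i M) (gamma i)
   + \sum_(i | i != k) bnd Sigma (col i M0 - col i M) (gamma i)).
move=> mu W P [hW [hP hE]].
set Mp := replace_col M0 k mu in hE.
have hcol i : col i P = col i Mp - (2 * gamma i) *: (Sigma *m col i W).
  have e : col i (2 *: (Sigma *m W *m Gam gamma)) = (2 * gamma i) *: (Sigma *m col i W).
    by rewrite colZ colM colGam scalemxAr [col i W]colE mulmxA scalerA mulrC scalemxAr.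
  have := congr1 (col i) hE; rewrite e => h.
  rewrite -h; apply/matrixP => a b; rewrite !mxE.
  lra.
have hMp i : i != k -> col i Mp = col i M0.
  by move=> ne; apply/matrixP => a b; rewrite !mxE (negbTE ne).
set f := fun i => dot (col i W) (col i M) - gamma i * dot (col i W) (Sigma *m col i W).
set U := fun i => utility Sigma gamma M i W P.
have hsum : \sum_i U i = \sum_i f i.
  have -> : \sum_i U i = \sum_i (f i - dot (col i W) (col i P)).
    by apply: eq_bigr => i _; rewrite /U /f uE; lra.
  by rewrite sumrB trace0 // subr0.
have hUk : U k = \sum_i f i - \sum_(i | i != k) U i.
  by rewrite -hsum (bigD1 k) //=; lra.
have hf : \sum_i f i <= \sum_i bnd Sigma (col i M) (gamma i).
  by apply: ler_sum => i _; apply: bndP.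
have hU : - \sum_(i | i != k) U i <= \sum_(i | i != k) bnd Sigma (col i M0 - col i M) (gamma i).
  rewrite -sumrN; apply: ler_sum => i ne.
  have h := bndP (col i M0 - col i M) (col i W) hpd (hg i).
  suff -> : - U i = dot (col i W) (col i M0 - col i M)
                   - gamma i * dot (col i W) (Sigma *m col i W) by [].
  rewrite /U uE hcol (hMp i ne) !dotBr dotZr; lra.
rewrite -/(U k) hUk; lra.
Qed.
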